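(* Let $(\Omega,\mathcal F)$ be a measurable space, $\mathcal X$ the set of bounded measurable functions, $\mathcal P_1,\dots,\mathcal P_n$ nonempty sets of probability measures on $(\Omega,\mathcal F)$, and $\alpha_1,\dots,\alpha_n\in(0,1)$. Then for all $X\in\mathcal X$, $$\mathop{\square}_{i=1}^n\sup_{\mathbb Q\in\mathcal P_i}\mathrm{VaR}^{\mathbb Q}_{\alpha_i}(X)=\inf\{x\in\mathbb R:\{X>x\}\in\mathcal C\},\qquad \mathcal C=\Big\{\bigcup_{i=1}^nA_i: A_i\in\mathcal F,\ \sup_{\mathbb Q\in\mathcal P_i}\mathbb Q(A_i)\le\alpha_i,\ i=1,\dots,n\Big\}.$$
   Context: For a probability $\mathbb Q$ and $\alpha\in(0,1)$, $\mathrm{VaR}^{\mathbb Q}_\alpha(X)=\inf\{x\in\mathbb R:\mathbb Q(X\ge x)\le\alpha\}$. Inf-convolution: $\mathop{\square}_{i=1}^n\rho_i(X)=\inf\{\sum_{i=1}^n\rho_i(X_i): X_i\in\mathcal X,\ \sum_iX_i=X\}$. *)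

(* Defs.v *)
From HB Require Import structures.
From mathcomp Require Import all_boot all_order all_algebra.
From mathcomp Require Import all_classical all_reals.
From mathcomp Require Import all_analysis.
Set Implicit Arguments. Unset Strict Implicit. Unset Printing Implicit Defensive.
Import Order.TTheory GRing.Theory Num.Theory.
Local Open Scope classical_set_scope.
Local Open Scope ring_scope.
Local Open Scope ereal_scope.

Section Defs.
Context {d : measure_display} {T : measurableType d} {R : realType}.

Definition bounded_measurable (X : T -> R) : Prop :=
  measurable_fun setT X /\ exists M : R, forall w, (`|X w| <= M)%R.

Definition VaR (Q : probability T R) (alpha : R) (X : T -> R) : \bar R :=
  ereal_inf [set x%:E | x in [set x : R | Q [set w | (x <= X w)%R] <= alpha%:E]].

Definition supVaR (P : set (probability T R)) (alpha : R) (X : T -> R) : \bar R :=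
  ereal_sup [set VaR Q alpha X | Q in P].

Definition infconv (n : nat) (rho : 'I_n -> (T -> R) -> \bar R) (X : T -> R) : \bar R :=
  ereal_inf [set \sum_(i < n) rho i (Xs i) | Xs in
    [set Xs : 'I_n -> T -> R | (forall i, bounded_measurable (Xs i)) /\
       (forall w, (\sum_(i < n) Xs i w)%R = X w)]].

Definition classC (n : nat) (P : 'I_n -> set (probability T R)) (alpha : 'I_n -> R)
  : set (set T) :=
  [set A | exists As : 'I_n -> set T,
     (forall i, measurable (As i) /\
        ereal_sup [set Q (As i) | Q in P i] <= (alpha i)%:E) /\
     A = \big[setU/set0]_(i < n) As i].

End Defs.

(* Main.v *)
Require Import Defs.
From HB Require Import structures.
From mathcomp Require Import all_boot all_order all_algebra.
From mathcomp Require Import all_classical all_reals.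
From mathcomp Require Import all_analysis.
From mathcomp Require Import measurable_realfun.
From mathcomp Require Import lra.
Import Order.TTheory GRing.Theory Num.Theory.
Local Open Scope classical_set_scope.
Local Open Scope ring_scope.
Local Open Scope ereal_scope.

Section Helpers.
Context {d : measure_display} {T : measurableType d} {R : realType}.

Lemma bigU_memP {n} (p : pred 'I_n) (F : 'I_n -> set T) w :
  (\big[setU/set0]_(i < n | p i) F i) w <-> exists i, p i /\ F i w.
Proof.
split.
  elim/big_rec: _ => [//|i A pi IH [Fi|HA]]; first by exists i.
  exact: IH.
move=> [i [pi Fi]]; rewrite (bigD1 i) //=; by left.
Qed.

Lemma bigU_memP' n (F : 'I_n -> set T) w :
  (\big[setU/set0]_(i < n) F i) w <-> exists i, F i w.
Proof.
have [h1 h2] := bigU_memP xpredT F w; split.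
  by move=> /h1 [i [_ Fi]]; exists i.
by move=> [i Fi]; apply: h2; exists i.
Qed.

Lemma meas_gt (f : T -> R) (c : R) : measurable_fun setT f ->
  measurable [set w | (c < f w)%R].
Proof.
move=> mf.
have := measurable_fun_ltr (measurable_cst c) mf measurableT (Y := [set true]) I.
by rewrite setTI.
Qed.

Lemma meas_ge (f : T -> R) (c : R) : measurable_fun setT f ->
  measurable [set w | (c <= f w)%R].
Proof.
move=> mf.
have := measurable_fun_ler (measurable_cst c) mf measurableT (Y := [set true]) I.
by rewrite setTI.
Qed.

Lemma VaR_ge (Q : probability T R) (a : R) (Y : T -> R) (M : R) :
  (a < 1)%R -> (forall w, `|Y w| <= M)%R -> (- M)%:E <= VaR Q a Y.
Proof.
move=> a1 HM; apply: le_ereal_inf_tmp => _ [x Hx <-]; rewrite lee_fin.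
rewrite leNgt; apply/negP => xM.
have : [set w | (x <= Y w)%R] = setT.
  apply/seteqP; split => // w _ /=.
  have := HM w; rewrite ler_norml => /andP[h _].
  exact: (ltW (lt_le_trans xM h)).
move=> E; move: Hx; rewrite /= E probability_setT lee_fin => h.
by move: (lt_le_trans a1 h); rewrite ltxx.
Qed.

Lemma VaR_le (Q : probability T R) (a : R) (Y : T -> R) (M : R) :
  (0 < a)%R -> (forall w, `|Y w| <= M)%R -> VaR Q a Y <= (M + 1)%:E.
Proof.
move=> a0 HM; apply: ereal_inf_lbound; exists (M + 1)%R => //=.
have -> : [set w | (M + 1 <= Y w)%R] = set0.
  apply/seteqP; split => // w /= h.
  have := HM w; rewrite ler_norml => /andP[_ h2].
  have := le_trans h h2; by rewrite gerDl ler10.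
by rewrite measure0 lee_fin ltW.
Qed.

Lemma VaR_le_c (Q : probability T R) (a : R) (Y : T -> R) (c : R) :
  (forall y : R, (c < y)%R -> Q [set w | (y <= Y w)%R] <= a%:E) ->
  VaR Q a Y <= c%:E.
Proof.
move=> H; apply/lee_addgt0Pr => e e0; apply: ereal_inf_lbound.
exists (c + e)%R; last by rewrite EFinD.
by apply: H; rewrite ltrDl.
Qed.

Lemma supVaR_fin (P : set (probability T R)) (a : R) (Y : T -> R) :
  P !=set0 -> (0 < a < 1)%R -> (exists M, forall w, `|Y w| <= M)%R ->
  supVaR P a Y = (fine (supVaR P a Y))%:E.
Proof.
move=> [Q PQ] /andP[a0 a1] [M HM].
have lo : (- M)%:E <= supVaR P a Y.
  apply: le_trans (VaR_ge Q a Y M a1 HM) _.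
  by apply: ereal_sup_ubound; exists Q.
have hi : supVaR P a Y <= (M + 1)%:E.
  by apply: ge_ereal_sup => _ [Q' PQ' <-]; exact: VaR_le.
by move: lo hi; case: (supVaR P a Y).
Qed.

End Helpers.

Theorem corollary1 (d : measure_display) (T : measurableType d) (R : realType)
  (n : nat) (hn : (0 < n)%N)
  (P : 'I_n -> set (probability T R)) (hP : forall i, P i !=set0)
  (alpha : 'I_n -> R) (halpha : forall i, (0 < alpha i < 1)%R)
  (X : T -> R) (hX : bounded_measurable X) :
  infconv (fun i => supVaR (P i) (alpha i)) X =
  ereal_inf [set x%:E | x in
    [set x : R | classC P alpha [set w | (x < X w)%R]]].
Proof.
destruct n as [|m]; first by [].
apply/eqP; rewrite eq_le; apply/andP; split.
- apply: le_ereal_inf_tmp => _ [x [As [HAs HU]] <-].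
  pose U (k : nat) := \big[setU/set0]_(i < m.+1 | (i < k)%N) As i.
  have mU k : measurable (U k).
    by apply: bigsetU_measurable => i _; exact: (HAs i).1.
  have [mX [M HM]] := hX.
  pose phi (k : nat) (w : T) := (\1_(U k) w * (X w - x))%R.
  pose m0 (i : 'I_m.+1) : T -> R :=
    if i == ord0 then (X \min cst x) else cst 0%R.
  pose Xs (i : 'I_m.+1) (w : T) := (phi i.+1 w - phi i w + m0 i w)%R.
  pose c (i : 'I_m.+1) : R := if i == ord0 then x else 0%R.
  have mphi k : measurable_fun setT (phi k).
    apply: measurable_funM; first exact: measurable_indic.
    apply: measurable_funB => //; exact: measurable_cst.
  have mXs i : measurable_fun setT (Xs i).
    apply: measurable_funD; first exact: measurable_funB.
    rewrite /m0; case: ifP => _; last exact: measurable_cst.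
    apply: measurable_minr => //; exact: measurable_cst.
  have Usucc (i : 'I_m.+1) w : ~ As i w -> U i.+1 w <-> U i w.
    move=> nA; rewrite /U; split.
    + move=> /bigU_memP [j [ji Aj]]; apply/bigU_memP; exists j; split => //.
      rewrite ltnS leq_eqVlt in ji; case/orP: ji => // /eqP ji.
      by exfalso; apply: nA; have <- : j = i by apply: val_inj.
    + move=> /bigU_memP [j [ji Aj]]; apply/bigU_memP; exists j; split => //.
      exact: ltnW.
  have Xs_out (i : 'I_m.+1) w : ~ As i w -> (Xs i w <= c i)%R.
    move=> nA; rewrite /Xs /phi !indicE.
    have -> : (w \in U i.+1) = (w \in U i).
      by apply/idP/idP => /set_mem h; apply: mem_set; apply (Usucc i w nA).
    rewrite subrr add0r /m0 /c; case: ifP => _ /=; last by [].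
    by rewrite ge_min lexx orbT.
  have bXs i : bounded_measurable (Xs i).
    split => //; exists (3 * (M + `|x|))%R => w.
    have hw := HM w; rewrite ler_norml in hw; case/andP: hw => h1 h2.
    have hx : (- `|x| <= x <= `|x|)%R by rewrite -ler_norml.
    case/andP: hx => h3 h4.
    have hm1 : (- (M + `|x|) <= Order.min (X w) x)%R.
      by rewrite le_min; apply/andP; split; lra.
    have hm2 : (Order.min (X w) x <= M + `|x|)%R.
      by rewrite ge_min; apply/orP; left; lra.
    have hp k : (- (M + `|x|) <= phi k w <= M + `|x|)%R.
      rewrite /phi indicE; case: (w \in U k) => /=; rewrite ?mul1r ?mul0r;
        apply/andP; split; lra.
    have hq : (- (M + `|x|) <= m0 i w <= M + `|x|)%R.
      rewrite /m0; case: ifP => _ /=; apply/andP; split; lra.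
    rewrite ler_norml /Xs.
    case/andP: (hp i.+1) => p1 p2; case/andP: (hp i) => p3 p4.
    case/andP: hq => q1 q2.
    apply/andP; split; lra.
  have sumc : (\sum_(i < m.+1) c i = x)%R.
    rewrite (bigD1 ord0) //= big1 ?addr0; first by rewrite /c eqxx.
    by move=> i /negbTE; rewrite /c => ->.
  have sumXs w : (\sum_(i < m.+1) Xs i w)%R = X w.
    rewrite /Xs big_split /=.
    rewrite -(big_mkord xpredT (fun k => phi k.+1 w - phi k w)%R).
    rewrite telescope_sumr //.
    rewrite (bigD1 ord0) //= big1 ?addr0; last first.
      by move=> i /negbTE; rewrite /m0 => ->.
    have U0 : ~ U 0%N w by move=> /bigU_memP [j [//]].
    have Um : U m.+1 w <-> (x < X w)%R.
      split.
        move=> /bigU_memP [j [_ Aj]].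
        have : [set w | (x < X w)%R] w by rewrite HU; apply/bigU_memP'; exists j.
        by [].
      move=> h; have : [set w | (x < X w)%R] w by [].
      rewrite HU => /bigU_memP' [j Aj]; apply/bigU_memP; by exists j.
    rewrite /phi /m0 eqxx !indicE /=.
    have -> : (w \in U 0%N) = false by apply: memNset.
    case: (boolP (x < X w)%R) => h.
      have -> : (w \in U m.+1) = true by apply: mem_set; apply/Um.
      rewrite (min_r (ltW h)) /=; lra.
    have -> : (w \in U m.+1) = false.
      by apply: memNset => /Um; apply/negP.
    rewrite -leNgt in h; rewrite (min_l h) /=; lra.
  apply: (@le_trans _ _ (\sum_(i < m.+1) supVaR (P i) (alpha i) (Xs i))).
    apply: ereal_inf_lbound; exists Xs => //; split => //.
  apply: (@le_trans _ _ (\sum_(i < m.+1) (c i)%:E)); last by rewrite sumEFin sumc.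
  apply: lee_sum => i _; apply: ge_ereal_sup => _ [Q PQ <-].
  apply: VaR_le_c => y cy.
  have sub : [set w | (y <= Xs i w)%R] `<=` As i.
    move=> w /= hy; apply: contrapT => nA; have := Xs_out i w nA.
    move=> h; have := lt_le_trans cy (le_trans hy h); by rewrite ltxx.
  apply: le_trans (le_measure Q _ _ sub) _.
  + by rewrite inE; apply: meas_ge.
  + by rewrite inE; exact: (HAs i).1.
  apply: le_trans (HAs i).2; apply: ereal_sup_ubound; by exists Q.
- apply: le_ereal_inf_tmp => _ [Xs [HXs Hsum] <-].
  have Es i : supVaR (P i) (alpha i) (Xs i) =
      (fine (supVaR (P i) (alpha i) (Xs i)))%:E.
    apply: supVaR_fin => //; exact: (HXs i).2.
  pose s i := fine (supVaR (P i) (alpha i) (Xs i)).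
  rewrite (eq_bigr (fun i => (s i)%:E)); last by move=> i _; exact: Es.
  rewrite sumEFin; apply/lee_addgt0Pr => e e0.
  pose y i := (s i + e / m.+1%:R)%R.
  pose S := (\sum_(i < m.+1) s i + e)%R.
  have sumy : (\sum_(i < m.+1) y i = S)%R.
    rewrite /y big_split /= sumr_const card_ord -[(e / _ *+ _)%R]mulr_natr divfK //.
  apply: ereal_inf_lbound; exists S; last by rewrite EFinD.
  exists (fun i => [set w | (y i < Xs i w)%R] `&` [set w | (S < X w)%R]); split.
    move=> i; split.
      by apply: measurableI; apply: meas_gt; [exact: (HXs i).1 | exact: hX.1].
    apply: ge_ereal_sup => _ [Q PQ <-].
    have : VaR Q (alpha i) (Xs i) < (y i)%:E.
      apply: (@le_lt_trans _ _ (s i)%:E).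
        rewrite /s -Es; apply: ereal_sup_ubound; by exists Q.
      by rewrite lte_fin /y ltrDl divr_gt0.
    move=> /ereal_inf_lt [_ [z Hz <-]] zy.
    apply: le_trans Hz.
    apply: le_measure.
    + rewrite inE; apply: measurableI; apply: meas_gt;
        [exact: (HXs i).1 | exact: hX.1].
    + rewrite inE; apply: meas_ge; exact: (HXs i).1.
    move=> w [/= h _]; rewrite lte_fin in zy; exact: ltW (lt_trans zy h).
  apply/seteqP; split => w /=.
    move=> Sw; apply/bigU_memP'.
    case: (pselect (exists i, (y i < Xs i w)%R)) => [[i hi]|nE].
      by exists i.
    exfalso.
    have : (X w <= S)%R.
      rewrite -Hsum -sumy; apply: ler_sum => i _; rewrite leNgt; apply/negP => h.
      by apply: nE; exists i.
    by rewrite leNgt Sw.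
  by move=> /bigU_memP' [i [_ h]].
Qed.
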